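(* Let $\psi$ be an injective map from the positive integers to the positive integers and let $A=\{\psi(n): n\ge 1\}$. Let $\alpha$ be a positive integer. Define $\Gamma^{\psi}_{\alpha}(0)=1$ and, for a positive integer $m$, \[ \Gamma^{\psi}_{\alpha}(m)=\sum_{(N_0,N_1,N_2,\dots)}\ \prod_{j\ge0}\bar{p}^{A}(N_j), \] the sum running over all sequences of nonnegative integers $(N_0,N_1,\dots)$ with $m=(\alpha+1)\sum_{i\ge0}2^{i}N_i$ (so $\Gamma^{\psi}_{\alpha}(m)=0$ if there is no such sequence). Then for every nonnegative integer $n$, \[ p^{A}_{\alpha}(n)=\sum_{i=0}^{n}p^{A}(n-i)\,\Gamma^{\psi}_{\alpha}(i). \]
   Context: For a set $A$ of positive integers and a positive integer $\alpha$, $p^{A}_{\alpha}(n)$ is the number of partitions of $n$ into parts from $A$ in which each part occurs at most $\alpha$ times, and $p^{A}(n)$ is the number of partitions of $n$ into parts from $A$ without restriction; $p^{A}_{\alpha}(0)=p^{A}(0)=1$. Further $\bar{p}^{A}(n)=E^{A}(n)-O^{A}(n)$, where $E^{A}(n)$ (resp. $O^{A}(n)$) is the number of partitions of $n$ into parts from $A$ (no restriction on multiplicities) with an even (resp. odd) number of parts, and $\bar{p}^{A}(0)=1$. *)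

(* Defs.v *)
From mathcomp Require Import all_boot all_order all_algebra.
From mathcomp Require Import boolp.
Local Open Scope ring_scope.
Import Order.TTheory GRing.Theory Num.Theory.

Definition inA (psi : nat -> nat) (k : nat) : Prop :=
  exists j : nat, (0 < j)%N /\ psi j = k.

(* A partition of n is encoded by its multiplicity function f : part k |-> f k,
   for parts k in {0,...,n} (each multiplicity is at most n). *)
Definition mset (n : nat) := {ffun 'I_n.+1 -> 'I_n.+1}.

Definition is_partA (psi : nat -> nat) (n : nat) (f : mset n) : Prop :=
  (nat_of_ord (f ord0) = 0%N) /\
  (forall k : 'I_n.+1, ~ inA psi k -> nat_of_ord (f k) = 0%N) /\
  (\sum_(k < n.+1) k * f k)%N = n.

Definition nparts n (f : mset n) : nat := (\sum_(k < n.+1) f k)%N.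

Definition pA (psi : nat -> nat) (n : nat) : nat :=
  #|[set f : mset n | `[< is_partA psi n f >] ]|.

Definition pA_alpha (psi : nat -> nat) (alpha n : nat) : nat :=
  #|[set f : mset n | `[< is_partA psi n f /\ forall k : 'I_n.+1, (nat_of_ord (f k) <= alpha)%N >] ]|.

Definition pbarA (psi : nat -> nat) (n : nat) : int :=
  \sum_(f : mset n | `[< is_partA psi n f >]) (-1) ^+ nparts n f.

(* For m > 0, a sequence (N_0, N_1, ...) with
   m = (alpha+1) sum_i 2^i N_i has N_i = 0 for i >= m (as 2^m > m) and
   N_i <= m, and contributes pbar(0) = 1 for the zero entries; so it is
   encoded by the finite function N : 'I_m -> 'I_m.+1. *)
Definition Gamma (psi : nat -> nat) (alpha m : nat) : int :=
  if m == 0%N then 1 else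
  \sum_(N : {ffun 'I_m -> 'I_m.+1} |
          (alpha.+1 * \sum_(i < m) 2 ^ i * N i)%N == m)
     \prod_(i < m) pbarA psi (N i).

(* Main.v *)
Require Import Defs.
From mathcomp Require Import all_boot all_order all_algebra.
From mathcomp Require Import boolp.
From mathcomp Require Import ring zify.
Import Order.TTheory GRing.Theory Num.Theory.
Local Open Scope ring_scope.

Definition eqm (m : nat) (p q : {poly int}) := forall i, (i <= m)%N -> p`_i = q`_i.

Lemma eqm_refl m p : eqm m p p. Proof. by []. Qed.
Lemma eqm_sym m p q : eqm m p q -> eqm m q p. Proof. by move=> H i /H. Qed.
Lemma eqm_trans m p q r : eqm m p q -> eqm m q r -> eqm m p r.
Proof. by move=> H1 H2 i Hi; rewrite H1 // H2. Qed.
Arguments eqm_trans {m p q r}.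
Lemma eqmD m p q r s : eqm m p q -> eqm m r s -> eqm m (p + r) (q + s).
Proof. by move=> H1 H2 i Hi; rewrite !coefD H1 // H2. Qed.
Lemma eqmN m p q : eqm m p q -> eqm m (- p) (- q).
Proof. by move=> H1 i Hi; rewrite !coefN H1. Qed.
Lemma eqmM m p q r s : eqm m p q -> eqm m r s -> eqm m (p * r) (q * s).
Proof.
move=> H1 H2 i Hi; rewrite !coefM; apply: eq_bigr => j _.
rewrite H1 ?H2 //; first by rewrite (leq_trans (leq_subr _ _) Hi).
by rewrite (leq_trans _ Hi) // -ltnS.
Qed.
Lemma eqm_sum m (I : Type) (r : seq I) (P : pred I) (F G : I -> {poly int}) :
  (forall i, P i -> eqm m (F i) (G i)) ->
  eqm m (\sum_(i <- r | P i) F i) (\sum_(i <- r | P i) G i).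
Proof. by move=> H; apply: big_ind2 => //; exact: eqmD. Qed.
Lemma eqm_prod m (I : Type) (r : seq I) (P : pred I) (F G : I -> {poly int}) :
  (forall i, P i -> eqm m (F i) (G i)) ->
  eqm m (\prod_(i <- r | P i) F i) (\prod_(i <- r | P i) G i).
Proof. by move=> H; apply: big_ind2 => //; exact: eqmM. Qed.
Lemma eqm_Xn m d p : (m < d)%N -> eqm m (p * 'X^d) 0.
Proof. by move=> Hd i Hi; rewrite coefMXn coef0 (leq_ltn_trans Hi Hd). Qed.
Lemma eqm_mul0 m p q : eqm m p 0 -> eqm m (q * p) 0.
Proof. by move=> H; rewrite -(mulr0 q); apply: eqmM. Qed.
Lemma eqm_comp m d p q : (0 < d)%N -> eqm m p q -> eqm m (p \Po 'X^d) (q \Po 'X^d).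
Proof.
move=> Hd H i Hi; rewrite !coef_comp_poly_Xn //; case: ifP => // _.
by rewrite H // (leq_trans _ Hi) // leq_div.
Qed.
Lemma eqm_trunc m p : eqm m p (\sum_(s < m.+1) (p`_s)%:P * 'X^s).
Proof.
move=> i Hi; rewrite coef_sum (bigD1 (Ordinal (Hi : (i < m.+1)%N))) //= coefCM coefXn eqxx mulr1.
rewrite big1 ?addr0 // => j Hj; rewrite coefCM coefXn.
case: eqP => [E|]; last by rewrite mulr0.
by move: Hj; rewrite -val_eqE /= E eqxx.
Qed.
Lemma eqm_sum_trunc m J1 J2 (F : nat -> {poly int}) : (J1 <= J2)%N ->
  (forall t, (J1 <= t < J2)%N -> eqm m (F t) 0) ->
  eqm m (\sum_(t < J2) F t) (\sum_(t < J1) F t).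
Proof.
move=> HJ H; rewrite (big_ord_widen _ _ HJ) (bigID (fun t : 'I_J2 => (t < J1)%N)) /=.
apply: (@eqm_trans _ _ (\sum_(t < J2 | (t < J1)%N) F t + 0)); last by rewrite addr0.
apply: eqmD => //.
apply: (@eqm_trans _ _ (\sum_(t < J2 | ~~ (t < J1)%N) (0 : {poly int}))); last by rewrite big1.
apply: eqm_sum => t Ht; apply: H; rewrite ltn_ord andbT; by rewrite leqNgt.
Qed.
Lemma eqm_prod_trunc m I1 I2 (F : nat -> {poly int}) : (I1 <= I2)%N ->
  (forall t, (I1 <= t < I2)%N -> eqm m (F t) 1) ->
  eqm m (\prod_(t < I2) F t) (\prod_(t < I1) F t).
Proof.
move=> HJ H; rewrite (big_ord_widen _ _ HJ) (bigID (fun t : 'I_I2 => (t < I1)%N)) /=.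
apply: (@eqm_trans _ _ (\prod_(t < I2 | (t < I1)%N) F t * 1)); last by rewrite mulr1.
apply: eqmM => //.
apply: (@eqm_trans _ _ (\prod_(t < I2 | ~~ (t < I1)%N) (1 : {poly int}))); last by rewrite big1.
apply: eqm_prod => t Ht; apply: H; rewrite ltn_ord andbT; by rewrite leqNgt.
Qed.

Lemma coef_prod_sum (I J : finType) (a : I -> J -> int) (d : I -> J -> nat) i0 :
  (\prod_(i : I) \sum_(j : J) (a i j)%:P * 'X^(d i j))`_i0 =
  \sum_(f : {ffun I -> J}) (\prod_i a i (f i)) * ((\sum_i d i (f i))%N == i0)%:R.
Proof.
rewrite bigA_distr_bigA coef_sum; apply: eq_bigr => f _.
rewrite big_split /= -rmorph_prod prodrXr coefCM coefXn; congr (_ * _).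
by rewrite eq_sym.
Qed.

Lemma prod_bool (N : nat) (b : 'I_N -> bool) :
  \prod_(i < N) ((b i)%:R : int) = ([forall i, b i])%:R.
Proof.
case: (boolP [forall i, b i]) => H.
  by rewrite big1 // => i _; move/forallP: H => ->.
move: H; rewrite negb_forall => /existsP [i Hi].
by rewrite (bigD1 i) //= (negbTE Hi) mul0r.
Qed.

Lemma card_sum m (P : pred (mset m)) :
  (#|[set f | P f]|)%:Z = \sum_(f : mset m) ((P f)%:R : int).
Proof.
rewrite -sum1_card -natz natr_sum big_mkcond /=; apply: eq_bigr => f _.
by rewrite inE; case: (P f).
Qed.

Definition aA psi k : bool := (0 < k)%N && `[< inA psi k >].
Definition W (w : nat -> nat -> int) (m k : nat) : {poly int} :=
  \sum_(t < m.+1) (w k t)%:P * 'X^(k * t).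
Definition PP w m := \prod_(k < m.+1) W w m k.

Lemma coef_PP w m : (PP w m)`_m = \sum_(f : mset m)
  (\prod_(k < m.+1) w k (f k)) * ((\sum_(k < m.+1) k * f k)%N == m)%:R.
Proof. by rewrite /PP /W coef_prod_sum. Qed.

Lemma partA_iff psi m (f : mset m) : `[< is_partA psi m f >] =
  [forall k, (f k == 0 :> nat) || aA psi k] && ((\sum_(k < m.+1) k * f k)%N == m).
Proof.
apply/asboolP/andP.
  case=> [H0 [HA Hs]]; split; last by apply/eqP.
  apply/forallP => k; case: (boolP (aA psi k)) => [_|Hk]; rewrite ?orbT // orbF.
  apply/eqP; move: Hk; rewrite negb_and => /orP [Hk0|HkA].
    have -> : k = ord0 by apply/val_inj; move: Hk0; rewrite lt0n negbK => /eqP.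
    exact H0.
  by apply HA => Hin; move/negP: HkA; apply; apply/asboolP.
case => /forallP H /eqP Hs; split; [|split]; last exact Hs.
  by have := H ord0; rewrite /aA ltnn /= orbF => /eqP.
move=> k Hk; have := H k; rewrite /aA; case: (asboolP (inA psi k)) => // _.
by rewrite andbF orbF => /eqP.
Qed.

Definition w1 psi k t : int := ((t == 0)%N || aA psi k)%:R.
Definition w2 psi alpha k t : int := (((t == 0)%N || aA psi k) && (t <= alpha)%N)%:R.
Definition w3 psi k t : int := ((t == 0)%N || aA psi k)%:R * (-1) ^+ t.

Lemma pA_coef psi m : (pA psi m)%:Z = (PP (w1 psi) m)`_m.
Proof.
rewrite coef_PP /pA card_sum; apply: eq_bigr => f _.
by rewrite /w1 prod_bool -natrM mulnb partA_iff.
Qed.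

Lemma pA_alpha_coef psi alpha m : (pA_alpha psi alpha m)%:Z = (PP (w2 psi alpha) m)`_m.
Proof.
rewrite coef_PP /pA_alpha card_sum; apply: eq_bigr => f _.
rewrite /w2 prod_bool -natrM mulnb asbool_and partA_iff.
have -> : `[< forall k : 'I_m.+1, (f k <= alpha)%N >] = [forall k, (f k <= alpha)%N].
  by apply/asboolP/forallP.
have -> : [forall k, ((f k == 0 :> nat) || aA psi k) && (f k <= alpha)%N] =
  [forall k, (f k == 0 :> nat) || aA psi k] && [forall k, (f k <= alpha)%N].
  apply/idP/idP.
    by move/forallP => H; apply/andP; split; apply/forallP => k; case/andP: (H k).
  by case/andP => /forallP H1 /forallP H2; apply/forallP => k; rewrite H1 H2.
by case: [forall _, _]; case: [forall _, _]; case: (_ == _).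
Qed.

Lemma pbarA_coef psi m : pbarA psi m = (PP (w3 psi) m)`_m.
Proof.
rewrite coef_PP /pbarA big_mkcond /=; apply: eq_bigr => f _.
rewrite /w3 big_split /= prod_bool prodrXr -/(nparts m f) partA_iff.
by case: [forall _, _]; case: (_ == _); rewrite /= ?mul1r ?mulr1 ?mul0r ?mulr0.
Qed.

Lemma PP_trunc w j n : (j <= n)%N -> (forall k, w k 0%N = 1) ->
  (forall t, (0 < t)%N -> w 0%N t = 0) ->
  (PP w n)`_j = (PP w j)`_j.
Proof.
move=> Hjn Hw0 Hw1.
have H1 : eqm j (PP w n) (\prod_(k < n.+1) W w j k).
  apply: eqm_prod => k _; rewrite /W; apply: (@eqm_sum_trunc j j.+1 n.+1 (fun t => (w k t)%:P * 'X^(k*t))) => // t /andP [Ht1 Ht2].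
  case: (posnP k) => [->|Hk].
    rewrite Hw1; last exact: (leq_ltn_trans (leq0n j) Ht1).
    by move=> i _; rewrite coefCM coef0 mul0r.
  apply: eqm_Xn.
  by apply: (leq_trans Ht1); rewrite leq_pmull.
suff H2 : eqm j (\prod_(k < n.+1) W w j k) (PP w j) by rewrite H1 // H2.
apply: (@eqm_prod_trunc j j.+1 n.+1 (W w j)) => // k /andP [Hk1 _].
rewrite /W; refine (eqm_trans (@eqm_sum_trunc j 1 j.+1 (fun t => (w k t)%:P * 'X^(k*t)) _ _) _) => //.
- move=> t /andP [Ht1 _]; apply: eqm_Xn.
  by apply: (leq_trans Hk1); rewrite leq_pmulr.
- by rewrite big_ord1 /= Hw0 muln0 expr0 mulr1; apply eqm_refl.
Qed.

Definition G2 psi c M L : {poly int} :=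
  \prod_(i < M) \sum_(s < L) (pbarA psi s)%:P * 'X^(c * 2 ^ i * s).

Lemma Gamma_coef psi alpha m : Gamma psi alpha m = (G2 psi alpha.+1 m m.+1)`_m.
Proof.
rewrite /Gamma /G2 coef_prod_sum; case: eqP => [->|_].
  under eq_bigr do rewrite !big_ord0 mul1r.
  by rewrite sumr_const card_ffun !card_ord expn0.
rewrite big_mkcond /=; apply: eq_bigr => N _.
rewrite big_distrr /=.
under [X in (X == m)%N]eq_bigr do rewrite mulnA.
by case: (_ == _); rewrite ?mulr1 ?mulr0.
Qed.

Lemma pbar0 psi : pbarA psi 0 = 1.
Proof.
by rewrite pbarA_coef /PP /W !big_ord1 /= /w3 /= expr0 mulr1 mul0n expr0 mulr1 coefC.
Qed.

Lemma G2_trunc psi c m n : (0 < c)%N -> (m <= n)%N ->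
  (G2 psi c n.+1 n.+1)`_m = (G2 psi c m m.+1)`_m.
Proof.
move=> Hc Hmn.
have H1 : eqm m (G2 psi c n.+1 n.+1)
   (\prod_(i < n.+1) \sum_(s < m.+1) (pbarA psi s)%:P * 'X^(c * 2 ^ i * s)).
  apply: eqm_prod => i _.
  apply: (@eqm_sum_trunc m m.+1 n.+1 (fun s => (pbarA psi s)%:P * 'X^(c * 2 ^ i * s))) => // s /andP [Hs1 _].
  apply: eqm_Xn; apply: (leq_trans Hs1); by rewrite leq_pmull // muln_gt0 Hc expn_gt0.
suff H2 : eqm m (\prod_(i < n.+1) \sum_(s < m.+1) (pbarA psi s)%:P * 'X^(c * 2 ^ i * s))
   (G2 psi c m m.+1) by rewrite H1 // H2.
apply: (@eqm_prod_trunc m m n.+1 (fun i => \sum_(s < m.+1) (pbarA psi s)%:P * 'X^(c * 2 ^ i * s))) => [|i /andP [Hi1 _]]; first exact: leqW.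
refine (eqm_trans (@eqm_sum_trunc m 1 m.+1 (fun s => (pbarA psi s)%:P * 'X^(c * 2 ^ i * s)) _ _) _) => //.
- move=> s /andP [Hs1 _]; apply: eqm_Xn.
  have : (m < 2 ^ i)%N by apply: (leq_ltn_trans Hi1); apply: ltn_expl.
  move/leq_trans; apply.
  by rewrite mulnC mulnA; apply: leq_pmull; rewrite muln_gt0 Hs1 Hc.
- by rewrite big_ord1 /= pbar0 muln0 expr0 mulr1; apply eqm_refl.
Qed.

Lemma geom (y : {poly int}) L : (1 - y) * \sum_(t < L) y ^+ t = 1 - y ^+ L.
Proof.
elim: L => [|L IH]; first by rewrite big_ord0 mulr0 expr0 subrr.
rewrite big_ord_recr /= mulrDr IH exprS; ring.
Qed.

Lemma tele (y : {poly int}) L :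
  (1 - y) * \prod_(i < L) (1 + y ^+ (2 ^ i)) = 1 - y ^+ (2 ^ L).
Proof.
elim: L => [|L IH]; first by rewrite big_ord0 mulr1 expn0 expr1.
rewrite big_ord_recr /= mulrA IH expnSr exprM; ring.
Qed.

Lemma W_triv w m k : (forall t, w k t = (t == 0)%:R) -> W w m k = 1.
Proof.
move=> H; rewrite /W big_ord_recl /= H eqxx muln0 expr0 mulr1 big1 ?addr0 //.
by move=> t _; rewrite H /= mul0r.
Qed.

Definition E psi alpha k : {poly int} := 1 - ((aA psi k)%:R)%:P * 'X^(alpha.+1 * k).

Lemma one_subX_neq0 k : (0 < k)%N -> (1 - 'X^k : {poly int}) != 0.
Proof.
move=> Hk; apply/eqP => H; have := congr1 (fun p : {poly int} => p`_0) H.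
by rewrite /= coefB coef1 coefXn coef0 (ltn_eqF Hk) subr0.
Qed.

Lemma L2 psi alpha n k : eqm n (W (w2 psi alpha) n k) (W (w1 psi) n k * E psi alpha k).
Proof.
case: (boolP (aA psi k)) => Hk; last first.
  have h1 : W (w1 psi) n k = 1 by apply W_triv => t; rewrite /w1 (negbTE Hk) orbF.
  have h2 : W (w2 psi alpha) n k = 1 by apply W_triv => t; rewrite /w2 (negbTE Hk) orbF; case: t.
  have h3 : E psi alpha k = 1 by rewrite /E (negbTE Hk) /= mul0r subr0.
  by rewrite h1 h2 h3 mulr1; apply eqm_refl.
have k0 : (0 < k)%N by case/andP: Hk.
set y : {poly int} := 'X^k.
set c := alpha.+1.
set M := n.+1.
have HS1 : W (w1 psi) n k = \sum_(t < M) y ^+ t.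
  by apply: eq_bigr => t _; rewrite /w1 Hk orbT polyC1 mul1r exprM.
have HS2 : W (w2 psi alpha) n k = \sum_(t < M) ((t < c)%N%:R)%:P * y ^+ t.
  by apply: eq_bigr => t _; rewrite /w2 Hk orbT /= exprM.
have HE : E psi alpha k = 1 - y ^+ c by rewrite /E Hk polyC1 mul1r mulnC exprM.
have key : (\sum_(t < M) y ^+ t) * (1 - y ^+ c) = (\sum_(t < c) y ^+ t) * (1 - y ^+ M).
  apply: (@mulfI _ (1 - y)); first exact: one_subX_neq0.
  by rewrite mulrA geom [RHS]mulrA geom mulrC.
rewrite HS1 HS2 HE key.
have H1 : eqm n (\sum_(t < M) ((t < c)%N%:R)%:P * y ^+ t)
               (\sum_(t < c) ((t < c)%N%:R)%:P * y ^+ t).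
  case: (leqP M c) => HMc.
    apply: eqm_sym; apply: (@eqm_sum_trunc n M c (fun t => ((t < c)%N%:R)%:P * y ^+ t)) => // t /andP [Ht1 _].
    rewrite -exprM; apply: eqm_Xn; apply: (leq_trans Ht1); exact: leq_pmull.
  apply: (@eqm_sum_trunc n c M (fun t => ((t < c)%N%:R)%:P * y ^+ t)); first exact: ltnW.
  move=> t /andP [Ht1 _]; rewrite ltnNge Ht1 /= mul0r; apply eqm_refl.
apply: (eqm_trans H1).
have -> : \sum_(t < c) ((t < c)%N%:R)%:P * y ^+ t = \sum_(t < c) y ^+ t.
  by apply: eq_bigr => t _; rewrite ltn_ord polyC1 mul1r.
rewrite mulrBr mulr1.
apply: (@eqm_trans _ _ (\sum_(t < c) y ^+ t - 0)); first by rewrite subr0; apply eqm_refl.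
apply: eqmD; first exact: eqm_refl.
apply: eqmN; apply: eqm_sym; rewrite -exprM; apply: eqm_Xn.
exact: leq_pmull.
Qed.

Lemma L3 psi alpha n k :
  eqm n (E psi alpha k) (\prod_(i < n.+1) (W (w3 psi) n k \Po 'X^(alpha.+1 * 2 ^ i))).
Proof.
case: (boolP (aA psi k)) => Hk; last first.
  have h1 : W (w3 psi) n k = 1.
    by apply W_triv => t; rewrite /w3 (negbTE Hk) orbF; case: t => [|t] /=; rewrite ?mulr1 ?mul0r.
  have h3 : E psi alpha k = 1 by rewrite /E (negbTE Hk) /= mul0r subr0.
  rewrite h1 h3 big1; first exact: eqm_refl.
  by move=> i _; rewrite -polyC1 comp_polyC.
have k0 : (0 < k)%N by case/andP: Hk.
set c := alpha.+1.
set M := n.+1.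
set y : {poly int} := 'X^(c * k).
have HW : forall i, W (w3 psi) n k \Po 'X^(c * 2 ^ i) = \sum_(t < M) (- y ^+ (2 ^ i)) ^+ t.
  move=> i; rewrite /W rmorph_sum; apply: eq_bigr => t _.
  rewrite rmorphM /= comp_polyC comp_Xn_poly /w3 Hk orbT mul1r [RHS]exprNn.
  rewrite polyC_exp polyCN polyC1 -!exprM; congr (_ * 'X^_).
  by rewrite -!mulnA; congr (c * _); exact: mulnCA.
under eq_bigr do rewrite HW.
have HE : E psi alpha k = 1 - y by rewrite /E Hk polyC1 mul1r.
rewrite HE.
have A1 : forall i, eqm n ((1 + y ^+ (2 ^ i)) * \sum_(t < M) (- y ^+ (2 ^ i)) ^+ t) 1.
  move=> i; have := geom (- y ^+ (2 ^ i)) M; rewrite opprK => ->.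
  apply: (@eqm_trans _ _ (1 - 0)); last by rewrite subr0; apply eqm_refl.
  apply: eqmD; first exact: eqm_refl.
  apply: eqmN; rewrite exprNn -!exprM; apply: eqm_Xn.
  have h2 : (0 < 2 ^ i)%N by rewrite expn_gt0.
  rewrite /M /c; move: h2 k0; set u := (2 ^ i)%N; nia.
set P := \prod_(i < M) \sum_(t < M) (- y ^+ (2 ^ i)) ^+ t.
have T := tele y M.
have H2 : eqm n (1 - y) ((1 - y) * \prod_(i < M) ((1 + y ^+ (2 ^ i)) * \sum_(t < M) (- y ^+ (2 ^ i)) ^+ t)).
  apply: (@eqm_trans _ _ ((1 - y) * \prod_(i < M) (1 : {poly int}))).
    by rewrite big1_eq mulr1; apply eqm_refl.
  apply: eqmM; first exact: eqm_refl.
  apply: eqm_prod => i _; apply: eqm_sym; exact: A1.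
apply: (eqm_trans H2); rewrite big_split /= -/P mulrA T mulrBl mul1r.
apply: (@eqm_trans _ _ (P - 0)); first last.
  by rewrite subr0; exact: eqm_refl.
apply: eqmD; first exact: eqm_refl.
apply: eqmN; rewrite mulrC -exprM; apply: eqm_Xn.
apply: (@leq_trans (2 ^ M)); first by apply: (ltn_trans (ltnSn n)); exact: ltn_expl.
by apply: leq_pmull; rewrite muln_gt0 k0.
Qed.

Lemma Hmain psi alpha n :
  eqm n (PP (w2 psi alpha) n) (PP (w1 psi) n * G2 psi alpha.+1 n.+1 n.+1).
Proof.
set c := alpha.+1.
have S1 : eqm n (PP (w2 psi alpha) n) (\prod_(k < n.+1) (W (w1 psi) n k * E psi alpha k)).
  by apply: eqm_prod => k _; exact: L2.
apply: (eqm_trans S1).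
rewrite big_split /=; apply: eqmM; first exact: eqm_refl.
have S2 : eqm n (\prod_(k < n.+1) E psi alpha k)
  (\prod_(k < n.+1) \prod_(i < n.+1) (W (w3 psi) n k \Po 'X^(c * 2 ^ i))).
  by apply: eqm_prod => k _; exact: L3.
apply: (eqm_trans S2).
rewrite exchange_big /=.
set Q : {poly int} := \sum_(s < n.+1) (pbarA psi s)%:P * 'X^s.
have HQ : eqm n (PP (w3 psi) n) Q.
  apply: (eqm_trans (eqm_trunc _ _)); rewrite /Q.
  have -> : \sum_(s < n.+1) ((PP (w3 psi) n)`_s)%:P * 'X^s =
            \sum_(s < n.+1) (pbarA psi s)%:P * 'X^s.
    have h0 : forall k, w3 psi k 0 = 1 by move=> k; rewrite /w3 /= mulr1.
    have h1 : forall t, (0 < t)%N -> w3 psi 0 t = 0.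
      by move=> t Ht; rewrite /w3 /aA ltnn /= (gtn_eqF Ht) /= mul0r.
    by apply: eq_bigr => s _; rewrite pbarA_coef (@PP_trunc _ s n _ h0 h1) // -ltnS.
  exact: eqm_refl.
have -> : G2 psi c n.+1 n.+1 = \prod_(i < n.+1) (Q \Po 'X^(c * 2 ^ i)).
  rewrite /G2; apply: eq_bigr => i _; rewrite /Q rmorph_sum; apply: eq_bigr => s _.
  by rewrite rmorphM /= comp_polyC comp_Xn_poly -exprM.
apply: eqm_prod => i _.
rewrite -rmorph_prod -/(PP (w3 psi) n).
apply: eqm_comp => //; by rewrite muln_gt0 expn_gt0.
Qed.

Theorem mainTheorem3 (psi : nat -> nat)
  (psi_pos : forall n : nat, (0 < n)%N -> (0 < psi n)%N)
  (psi_inj : forall i j : nat, (0 < i)%N -> (0 < j)%N -> psi i = psi j -> i = j)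
  (alpha : nat) (alpha_pos : (0 < alpha)%N) (n : nat) :
  ((pA_alpha psi alpha n)%:Z =
     \sum_(i < n.+1) (pA psi (n - i))%:Z * Gamma psi alpha i)%R.
Proof.
have h0 : forall k, w1 psi k 0 = 1 by [].
have h1 : forall t, (0 < t)%N -> w1 psi 0 t = 0.
  by move=> t Ht; rewrite /w1 /aA ltnn /= (gtn_eqF Ht).
have g0 : forall k, w2 psi alpha k 0 = 1 by [].
have g1 : forall t, (0 < t)%N -> w2 psi alpha 0 t = 0.
  by move=> t Ht; rewrite /w2 /aA ltnn /= (gtn_eqF Ht).
rewrite pA_alpha_coef (Hmain psi alpha n) // coefMr; apply: eq_bigr => j _.
rewrite pA_coef Gamma_coef -(@PP_trunc _ (n - j) n _ h0 h1) ?leq_subr //.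
by rewrite -(@G2_trunc psi alpha.+1 j n) // -ltnS.
Qed.
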